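(* Let $X$ be a complete nonsingular toric variety which is Fano and all of whose toric subvarieties are Fano. If a ray generator $\rho$ of the fan of $X$ is equal to a nonnegative linear combination of ray generators other than $\rho$, then the toric divisor $D$ associated to $\rho$ is exceptional.
   Context: For such $X$ (fan $\Delta$ in $N_{\mathbb R}$, ray generators $\rho$ corresponding to toric divisors $D$), a primitive set is a set $\{D_1,\ldots,D_k\}$ of toric divisors with empty intersection such that every proper subset has nonempty intersection (equivalently, $\rho_1,\ldots,\rho_k$ do not span a cone but every proper subset does). For these $X$, every primitive set satisfies either $\rho_1+\cdots+\rho_k=0$ or $\rho_1+\cdots+\rho_k=\widehat\rho$ for a ray generator $\widehat\rho$. A toric divisor $\widehat D$ is called exceptional if $\rho_1+\cdots+\rho_k=\widehat\rho$ for some primitive set $\{D_1,\ldots,D_k\}$. *)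

(* Defs.v *)
From HB Require Import structures.
From mathcomp Require Import all_boot all_order all_algebra.
From mathcomp Require Import reals.
Set Implicit Arguments. Unset Strict Implicit. Unset Printing Implicit Defensive.
Import Order.TTheory GRing.Theory Num.Theory.
Local Open Scope ring_scope.

(* A fan in N = Z^n: rays indexed by a finite type I, with ray generators
   u i : 'rV[int]_n, and a family of cones, each cone being given by the set
   of rays it contains (smooth cones are simplicial). *)

Section Toric.
Variables (R : realType) (n : nat) (I : finType) (u : I -> 'rV[int]_n).

Definition ur (i : I) : 'rV[R]_n := map_mx intr (u i).

Definition pair (m x : 'rV[R]_n) : R := (m *m x^T) 0 0.

Definition pos_cone (S : {set I}) (x : 'rV[R]_n) : Prop :=
  exists c : I -> R, (forall i, 0 <= c i) /\ x = \sum_(i in S) c i *: ur i.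

Definition Zbasis (S : {set I}) : Prop :=
  (forall v : 'rV[int]_n, exists c : I -> int, v = \sum_(i in S) c i *: u i) /\
  (forall c : I -> int, \sum_(i in S) c i *: u i = 0 -> forall i, i \in S -> c i = 0).

Definition smooth_complete_fan (cones : {set {set I}}) : Prop :=
  (forall i, [set i] \in cones) /\
  (forall S T : {set I}, T \in cones -> S \subset T -> S \in cones) /\
  (forall S T : {set I}, S \in cones -> T \in cones -> forall x,
      (pos_cone S x /\ pos_cone T x) <-> pos_cone (S :&: T) x) /\
  (forall S : {set I}, S \in cones -> exists2 T : {set I}, T \in cones & S \subset T /\ Zbasis T) /\
  (forall x : 'rV[R]_n, exists2 S : {set I}, S \in cones & pos_cone S x).

Definition maximal_cone (cones : {set {set I}}) (S : {set I}) : bool :=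
  (S \in cones) && [forall T in cones, (S \subset T) ==> (T == S)].

(* The orbit closure V(tau) is Fano: its anticanonical divisor (sum of all its
   toric divisors) is ample, expressed via the toric ampleness criterion
   (strict convexity of the support function) on the star fan of tau in
   N / N_tau.  Linear functionals on (N/N_tau)_R are functionals on N_R
   vanishing on the rays of tau; the rays of Star(tau) are the images of the
   rays i with tau + {i} a cone, i not in tau; the maximal cones of Star(tau)
   are the images of maximal cones sigma containing tau. *)
Definition orbit_closure_Fano (cones : {set {set I}}) (tau : {set I}) : Prop :=
  forall sigma : {set I}, maximal_cone cones sigma -> tau \subset sigma ->
    exists m : 'rV[R]_n,
      (forall i, i \in tau -> pair m (ur i) = 0) /\
      (forall i, i \in sigma -> i \notin tau -> pair m (ur i) = 1) /\
      (forall i, i |: tau \in cones -> i \notin sigma -> pair m (ur i) < 1).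

Definition Fano (cones : {set {set I}}) : Prop := orbit_closure_Fano cones set0.

Definition all_toric_subvarieties_Fano (cones : {set {set I}}) : Prop :=
  forall tau : {set I}, tau \in cones -> orbit_closure_Fano cones tau.

End Toric.

(* primitive set: the divisors have empty intersection (P is not a cone) but
   every proper subset has nonempty intersection (is a cone) *)
Definition primitive_set (I : finType) (cones : {set {set I}}) (P : {set I}) : Prop :=
  P \notin cones /\ forall Q : {set I}, Q \proper P -> Q \in cones.

Definition exceptional (n : nat) (I : finType) (u : I -> 'rV[int]_n)
    (cones : {set {set I}}) (j : I) : Prop :=
  exists P : {set I}, primitive_set cones P /\ \sum_(i in P) u i = u j.

(* Main.v *)
Require Import Defs.
From HB Require Import structures.
From mathcomp Require Import all_boot all_order all_algebra.
From mathcomp Require Import reals.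
From mathcomp Require Import lra.
From Stdlib Require Import ClassicalEpsilon Classical.
From mathcomp Require Import zify.
Import Order.TTheory GRing.Theory Num.Theory.
Local Open Scope ring_scope.
Set Implicit Arguments. Unset Strict Implicit. Unset Printing Implicit Defensive.

Section Main.
Variables (R : realType) (n : nat) (I : finType) (u : I -> 'rV[int]_n).

Local Notation ur := (ur R u).

Lemma pairE (m x : 'rV[R]_n) : pair m x = \sum_l m 0 l * x 0 l.
Proof. by rewrite /pair !mxE; apply: eq_bigr => l _; rewrite mxE. Qed.

Lemma pairD m (x y : 'rV[R]_n) : pair m (x + y) = pair m x + pair m y.
Proof. by rewrite !pairE -big_split /=; apply: eq_bigr => l _; rewrite mxE mulrDr. Qed.

Lemma pair0 (m : 'rV[R]_n) : pair m 0 = 0.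
Proof. by rewrite pairE big1 // => l _; rewrite mxE mulr0. Qed.

Lemma pairZ m a (x : 'rV[R]_n) : pair m (a *: x) = a * pair m x.
Proof.
rewrite !pairE mulr_sumr; apply: eq_bigr => l _; rewrite mxE.
by rewrite mulrCA.
Qed.

Lemma pairN m (x : 'rV[R]_n) : pair m (- x) = - pair m x.
Proof. by rewrite -scaleN1r pairZ mulN1r. Qed.

Lemma pair_sum m (J : Type) (r : seq J) (P : pred J) (F : J -> 'rV[R]_n) :
  pair m (\sum_(i <- r | P i) F i) = \sum_(i <- r | P i) pair m (F i).
Proof. exact: (big_morph (pair m) (pairD m) (pair0 m)). Qed.

Lemma urE i l : ur i 0 l = (u i 0 l)%:~R.
Proof. by rewrite /Defs.ur mxE. Qed.

Lemma ur_sum (S : {set I}) : \sum_(i in S) ur i = map_mx intr (\sum_(i in S) u i).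
Proof.
apply/rowP => l; rewrite !summxE mxE summxE rmorph_sum /=.
by apply: eq_bigr => i _; rewrite urE.
Qed.

Lemma ur_inj_sum (S : {set I}) j :
  \sum_(i in S) ur i = ur j -> \sum_(i in S) u i = u j.
Proof.
rewrite ur_sum => /rowP H; apply/rowP => l; have := H l.
by rewrite mxE urE => /eqP; rewrite eqr_int => /eqP.
Qed.

Lemma zbasis_dual (T : {set I}) : Zbasis u T ->
  exists lam : I -> 'rV[R]_n, exists z : I -> I -> int,
  [/\ (forall s i, pair (lam s) (ur i) = (z s i)%:~R),
      (forall s t, s \in T -> t \in T -> z s t = (s == t)%:R) &
      (forall x, x = \sum_(t in T) pair (lam t) x *: ur t)].
Proof.
case=> Hspan Hind.
have [f Hf] : exists f : 'I_n -> I -> int,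
    forall l, delta_mx 0 l = \sum_(i in T) f l i *: u i.
  exists (fun l => proj1_sig (constructive_indefinite_description _ (Hspan (delta_mx 0 l)))).
  by move=> l; exact: (proj2_sig (constructive_indefinite_description _ (Hspan (delta_mx 0 l)))).
pose lam s : 'rV[R]_n := \row_l ((f l s)%:~R).
exists lam, (fun s i => \sum_l f l s * u i 0 l).
have Hp s i : pair (lam s) (ur i) = (\sum_l f l s * u i 0 l)%:~R.
  rewrite pairE rmorph_sum /=; apply: eq_bigr => l _.
  by rewrite mxE urE intrM.
split => //.
- move=> s t sT tT.
  have E : u t = \sum_(i in T) (\sum_l f l i * u t 0 l) *: u i.
    rewrite {1}(row_sum_delta (u t)).
    under eq_bigr => l _ do rewrite Hf scaler_sumr.
    rewrite exchange_big /=; apply: eq_bigr => i _.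
    by rewrite scaler_suml; apply: eq_bigr => l _; rewrite scalerA mulrC.
  pose c i := (\sum_l f l i * u t 0 l) - (i == t)%:R.
  have H0 : \sum_(i in T) c i *: u i = 0.
    under eq_bigr => i _ do rewrite /c scalerBl.
    rewrite sumrB -E (bigD1 t) //= eqxx scale1r big1 ?addr0 ?subrr // => i /andP[_ /negbTE ->].
    by rewrite scale0r.
  have := Hind c H0 s sT; rewrite /c => /eqP; rewrite subr_eq0 => /eqP ->.
  by rewrite eq_sym.
- move=> x; apply/rowP => k.
  rewrite summxE.
  have Hfe l : \sum_(i in T) f l i * u i 0 k = (k == l)%:R.
    have := congr1 (fun M : 'rV_n => M 0 k) (Hf l); rewrite /= mxE summxE eqxx /= => ->.
    by apply: eq_bigr => i _; rewrite mxE.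
  have -> : x 0 k = \sum_l x 0 l * ((\sum_(i in T) f l i * u i 0 k)%:~R).
    under eq_bigr => l _ do rewrite Hfe.
    rewrite (bigD1 k) //= eqxx mulr1 big1 ?addr0 // => l /negbTE lk.
    by rewrite eq_sym lk mulr0.
  under eq_bigr => l _ do rewrite rmorph_sum mulr_sumr.
  rewrite exchange_big /=; apply: eq_bigr => i _.
  rewrite mxE pairE mulr_suml; apply: eq_bigr => l _.
  by rewrite !mxE intrM mulrA [x 0 l * _]mulrC.
Qed.


Definition supp_in (S : {set I}) (c : I -> R) := forall i, i \notin S -> c i = 0.

Lemma pos_coneP (S : {set I}) (x : 'rV[R]_n) : pos_cone u S x <->
  exists c : I -> R, [/\ (forall i, 0 <= c i), supp_in S c & x = \sum_i c i *: ur i].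
Proof.
split.
- case=> c0 [c0ge ->]; exists (fun i => if i \in S then c0 i else 0); split.
  + by move=> i; case: ifP.
  + by move=> i /negbTE ->.
  + by rewrite big_mkcond /=; apply: eq_bigr => i _; case: ifP => //; rewrite scale0r.
- case=> c [cge cS ->]; exists c; split => //.
  rewrite [RHS]big_mkcond /=; apply: eq_bigr => i _; case: ifP => // /negbT /cS ->.
  by rewrite scale0r.
Qed.

Lemma pos_cone_mono (S T : {set I}) (x : 'rV[R]_n) : S \subset T -> pos_cone u S x -> pos_cone u T x.
Proof.
move=> ST /pos_coneP [c [cge cS ->]]; apply/pos_coneP; exists c; split => //.
move=> i iT; apply: cS; apply: contra iT; exact: (subsetP ST).
Qed.

Lemma pos_cone0 (x : 'rV[R]_n) : pos_cone u set0 x -> x = 0.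
Proof. by case=> c [_ ->]; rewrite big_pred0 // => i; rewrite inE. Qed.

Variable cones : {set {set I}}.
Hypothesis Hfan : smooth_complete_fan R u cones.

Lemma Hsing i : [set i] \in cones.
Proof. by case: Hfan. Qed.
Lemma Hsub (S T : {set I}) : T \in cones -> S \subset T -> S \in cones.
Proof. by case: Hfan => _ [H _]; exact: H. Qed.
Lemma Hint (S T : {set I}) : S \in cones -> T \in cones -> forall x,
      (pos_cone u S x /\ pos_cone u T x) <-> pos_cone (R:=R) u (S :&: T) x.
Proof. by case: Hfan => _ [_ [H _]]; exact: H. Qed.
Lemma Hzb (S : {set I}) : S \in cones -> exists2 T : {set I}, T \in cones & S \subset T /\ Zbasis u T.
Proof. by case: Hfan => _ [_ [_ [H _]]]; exact: H. Qed.
Lemma Hcomp (x : 'rV[R]_n) : exists2 S : {set I}, S \in cones & pos_cone u S x.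
Proof. by case: Hfan => _ [_ [_ [_ H]]]; exact: H. Qed.

Lemma indep (S : {set I}) : S \in cones -> forall d : I -> R, supp_in S d ->
  \sum_i d i *: ur i = 0 -> forall i, d i = 0.
Proof.
move=> Sc d dS H0 i; case: (boolP (i \in S)) => iS; last exact: dS.
have [T Tc [ST /zbasis_dual [lam [z [Hp Hz _]]]]] := Hzb Sc.
have iT : i \in T by exact: (subsetP ST).
have := congr1 (pair (lam i)) H0; rewrite pair_sum pair0.
rewrite (bigD1 i) //= pairZ Hp Hz // eqxx mulr1 big1 ?addr0 // => k ki.
case: (boolP (k \in T)) => kT.
  by rewrite pairZ Hp Hz // eq_sym (negbTE ki) mulr0.
have kS : k \notin S by apply: contra kT; exact: (subsetP ST).
by rewrite dS // scale0r pair0.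
Qed.

Lemma coef_uniq (S : {set I}) : S \in cones -> forall c c' : I -> R, supp_in S c -> supp_in S c' ->
  \sum_i c i *: ur i = \sum_i c' i *: ur i -> forall i, c i = c' i.
Proof.
move=> Sc c c' cS c'S E i; apply/eqP; rewrite -subr_eq0; apply/eqP.
apply: (indep Sc (d := fun i => c i - c' i)) => [k kS|].
  by rewrite cS // c'S // subrr.
under eq_bigr => k _ do rewrite scalerBl.
by rewrite sumrB E subrr.
Qed.

Lemma ur_neq0 j : ur j != 0.
Proof.
apply/eqP => H.
have := indep (Hsing j) (d := fun i => (i == j)%:R).
rewrite (bigD1 j) //= eqxx scale1r big1 ?addr0; last first.
  by move=> i /negbTE ->; rewrite scale0r.
have sj : supp_in [set j] (fun i => (i == j)%:R).
  by move=> i; rewrite inE => /negbTE ->.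
by move=> /(_ sj H j); rewrite eqxx => /eqP; rewrite oner_eq0.
Qed.

Lemma max_exists (S : {set I}) : S \in cones -> exists2 s, maximal_cone cones s & S \subset s.
Proof.
move=> Sc.
pose P : pred nat := fun k => [exists T in cones, (S \subset T) && (#|T| == k)].
have ex : exists k, P k.
  by exists #|S|; apply/existsP; exists S; rewrite Sc subxx eqxx.
have bnd : forall k, P k -> (k <= #|I|)%N.
  by move=> k /existsP [T /and3P [_ _ /eqP <-]]; exact: max_card.
case: (ex_maxnP ex bnd) => k /existsP [T /and3P [Tc ST /eqP kT]] Hmax.
exists T => //; apply/andP; split => //; apply/forallP => T'; apply/implyP => T'c.
apply/implyP => TT'; rewrite eq_sym eqEcard TT' /=.
rewrite kT; apply: Hmax; apply/existsP; exists T'.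
by rewrite T'c (subset_trans ST TT') /=.
Qed.

Lemma max_zbasis (s : {set I}) : maximal_cone cones s -> Zbasis u s.
Proof.
case/andP => sc /forallP Hm.
have [T Tc [sT zT]] := Hzb sc.
have := Hm T; rewrite Tc /= sT /= => /eqP <- //.
Qed.


Lemma dual_coord (T : {set I}) (lam : I -> 'rV[R]_n) (z : I -> I -> int) :
  (forall s i, pair (lam s) (ur i) = (z s i)%:~R) ->
  (forall s t, s \in T -> t \in T -> z s t = (s == t)%:R) ->
  forall c, supp_in T c -> forall s, s \in T -> pair (lam s) (\sum_i c i *: ur i) = c s.
Proof.
move=> Hp Hz c cT s sT; rewrite pair_sum (bigD1 s) //= pairZ Hp Hz // eqxx mulr1.
rewrite big1 ?addr0 // => k ks; rewrite pairZ Hp.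
case: (boolP (k \in T)) => kT; first by rewrite Hz // eq_sym (negbTE ks) mulr0.
by rewrite cT // mul0r.
Qed.

Hypothesis HFT : all_toric_subvarieties_Fano R u cones.

Lemma FT_bound (s : {set I}) (tau : {set I}) (q : I) (lam : I -> 'rV[R]_n) (z : I -> I -> int) :
  maximal_cone cones s -> tau \subset s -> q |: tau \in cones -> q \notin s ->
  (forall s i, pair (lam s) (ur i) = (z s i)%:~R) ->
  (forall x, x = \sum_(t in s) pair (lam t) x *: ur t) ->
  \sum_(t in s | t \notin tau) z t q <= 0.
Proof.
move=> smax taus qtau qs Hp Hexp.
have sc : s \in cones by case/andP: smax.
have tauc : tau \in cones by exact: (Hsub sc taus).
have [m [m0 [m1 mlt]]] := HFT tauc smax taus.
have := mlt q qtau qs; rewrite (Hexp (ur q)) pair_sum.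
rewrite (eq_bigr (fun t => (if t \notin tau then (z t q)%:~R else 0))); last first.
  move=> t ts; rewrite pairZ Hp; case: (boolP (t \in tau)) => /= tt.
    by rewrite m0 // mulr0.
  by rewrite m1 // mulr1.
rewrite -big_mkcondr /= -rmorph_sum /= -[1 : R]/((1 : int)%:~R) ltr_int.
by rewrite -(ltzD1 _ 0) add0r.
Qed.


Lemma sum_ind (P : pred I) t : \sum_(q | P q) ((t == q)%:R : int) = (P t)%:R.
Proof.
case: (boolP (P t)) => Pt.
  rewrite (bigD1 t) //= eqxx big1 ?addr0 // => q /andP [_ qt].
  by rewrite eq_sym (negbTE qt).
by rewrite big1 // => q Pq; case: eqP => // tq; rewrite tq Pq in Pt.
Qed.

Lemma sato (Q : {set I}) : Q \notin cones -> (forall Q' : {set I}, Q' \proper Q -> Q' \in cones) ->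
  \sum_(i in Q) ur i = 0 \/ exists y, \sum_(i in Q) ur i = ur y.
Proof.
move=> Qn Qp.
set x := \sum_(i in Q) ur i.
have [S0 S0c Hx] := Hcomp x.
have [s smax S0s] := max_exists S0c.
have sc : s \in cones by case/andP: smax.
have xs := pos_cone_mono S0s Hx.
have [lam [z [Hp Hz Hexp]]] := zbasis_dual (max_zbasis smax).
pose a t := \sum_(q in Q) z t q.
have Hpa t : pair (lam t) x = (a t)%:~R.
  by rewrite /x pair_sum rmorph_sum; apply: eq_bigr => q _; exact: Hp.
have xe : x = \sum_(t in s) (a t)%:~R *: ur t.
  by rewrite {1}(Hexp x); apply: eq_bigr => t _; rewrite Hpa.
have age0 t : t \in s -> 0 <= a t.
  move=> ts; case/pos_coneP: xs => c [cge cs xc].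
  have := dual_coord Hp Hz cs ts; rewrite -xc Hpa => E.
  by rewrite -(ler_int R) E.
have Qsub : ~~ (Q \subset s).
  by apply/negP => Qs; apply: (negP Qn); exact: Hsub sc Qs.
have aQ p : p \in Q -> p \in s -> a p = 0.
  move=> pQ ps; apply/eqP; apply: contraT => ap0.
  have ap1 : 1 <= a p by have := age0 p ps; lia.
  set Q' := Q :\ p.
  have Q'c : Q' \in cones by apply: Qp; rewrite properD1.
  set y := \sum_(i in Q') ur i.
  have yQ : pos_cone u Q' y.
    apply/pos_coneP; exists (fun i => (i \in Q')%:R); split.
    - by move=> i; case: (i \in Q').
    - by move=> i /negbTE ->.
    - by rewrite /y big_mkcond /=; apply: eq_bigr => i _; case: (i \in Q'); rewrite ?scale1r ?scale0r.
  have ys : pos_cone u s y.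
    apply/pos_coneP; exists (fun t => if t \in s then (a t)%:~R - (t == p)%:R else 0); split.
    - move=> t; case: ifP => ts //; case: eqP => [->|_].
        by rewrite subr_ge0 -[1 : R]/((1 : int)%:~R) ler_int.
      by rewrite subr0 ler0z age0.
    - by move=> t /negbTE ->.
    - have E : x = ur p + y by rewrite /x (big_setD1 p pQ).
      rewrite (eq_bigr (fun t => if t \in s then ((a t)%:~R - (t == p)%:R) *: ur t else 0));
        last by move=> t _; case: ifP; rewrite ?scale0r.
      rewrite -big_mkcond /=.
      under eq_bigr => t _ do rewrite scalerBl.
      rewrite sumrB -xe E (bigD1 p) //= eqxx scale1r big1 ?addr0.
        by rewrite addrC addKr.
      by move=> t /andP [_ /negbTE ->]; rewrite scale0r.
  have := (Hint sc Q'c y).1 (conj ys yQ).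
  case/pos_coneP => c' [c'ge c'sQ yc'].
  have c'Q' : supp_in Q' c'.
    by move=> i iQ; apply: c'sQ; rewrite inE negb_and iQ orbT.
  have sQ' : supp_in Q' (fun i => (i \in Q')%:R) by move=> i /negbTE ->.
  have yQ'e : y = \sum_i (i \in Q')%:R *: ur i.
    by rewrite /y big_mkcond /=; apply: eq_bigr => i _; case: (i \in Q'); rewrite ?scale1r ?scale0r.
  have Ec := coef_uniq Q'c c'Q' sQ' (etrans (esym yc') yQ'e).
  suff : Q \subset s by rewrite (negbTE Qsub).
  apply/subsetP => r rQ.
  case: (eqVneq r p) => [-> //|rp].
  have rQ' : r \in Q' by rewrite !inE rp rQ.
  apply: contraT => rs.
  have := Ec r; rewrite rQ' c'sQ ?inE ?(negbTE rs) // => /eqP.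
  by rewrite eq_sym oner_eq0.
case/subsetPn: Qsub => q1 q1Q q1s.
have zsum t : t \in s -> \sum_(q in Q | q \notin s) z t q = a t - (t \in Q)%:R.
  move=> ts; apply/eqP; rewrite eq_sym subr_eq /a (bigID (fun q => q \in s)) /= addrC.
  apply/eqP; congr (_ + _).
  rewrite (eq_bigr (fun q => (t == q)%:R)); first by rewrite sum_ind ts andbT.
  by move=> q /andP [_ qs]; rewrite Hz.
have key : \sum_(t in s | t \notin Q) a t <= 1.
  case: (boolP [exists q2, [&& q2 \in Q, q2 \notin s & q2 != q1]]).
  - case/existsP => q2 /and3P [q2Q q2s q21].
    have Hq q : q \in Q -> q \notin s -> \sum_(t in s | t \notin Q) z t q <= 0.
      move=> qQ qs.
      have qc : q |: (Q :&: s) \in cones.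
        apply: Qp; rewrite properE; apply/andP; split.
          apply/subsetP => i; rewrite !inE => /orP [/eqP -> //|/andP [] //].
        apply/subsetPn; exists (if q == q1 then q2 else q1).
          by case: ifP.
        case: (eqVneq q q1) => [->|qq1].
          by rewrite !inE negb_or negb_and q21 q2s orbT.
        by rewrite !inE negb_or negb_and eq_sym qq1 q1s orbT.
      have := FT_bound smax (subsetIr Q s) qc qs Hp Hexp.
      congr (_ <= _); apply: eq_bigl => t; rewrite !inE.
      by case: (t \in s); case: (t \in Q).
    have -> : \sum_(t in s | t \notin Q) a t =
              \sum_(t in s | t \notin Q) \sum_(q in Q | q \notin s) z t q.
      by apply: eq_bigr => t /andP [ts /negbTE tQ]; rewrite zsum // tQ subr0.
    rewrite exchange_big /=.
    apply: (le_trans (y := 0)) => //; apply: sumr_le0 => q /andP [qQ qs].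
    exact: Hq.
  - move=> Hno.
    have only t : t \in Q -> t \notin s -> t = q1.
      move=> tQ ts; apply/eqP; apply: contraNT Hno => tq1.
      by apply/existsP; exists t; rewrite tQ ts tq1.
    have [p pQ pq1] : exists2 p, p \in Q & p != q1.
      apply/exists_inP; apply: contraT; rewrite negb_exists_in => /forall_inP H.
      suff : Q \in cones by rewrite (negbTE Qn).
      apply: (Hsub (Hsing q1)); apply/subsetP => i iQ.
      by rewrite inE; apply: contraT => iq1; have := H i iQ; rewrite iq1.
    have ps : p \in s.
      by apply: contraT => ps; have := only p pQ ps; move/eqP; rewrite (negbTE pq1).
    set tau := (Q :&: s) :\ p.
    have taus : tau \subset s by apply/subsetP => i; rewrite !inE => /and3P [].
    have qc : q1 |: tau \in cones.
      apply: Qp; rewrite properE; apply/andP; split.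
        by apply/subsetP => i; rewrite !inE => /orP [/eqP -> //|/and3P []].
      apply/subsetPn; exists p => //.
      by rewrite /tau !inE eqxx /= orbF.
    have := FT_bound smax taus qc q1s Hp Hexp.
    have zq1 t : t \in s -> z t q1 = a t - (t \in Q)%:R.
      move=> ts; rewrite -zsum // (eq_bigl (pred1 q1)) ?big_pred1_eq // => q /=.
      apply/idP/idP => [/andP [qQ qs]|/eqP ->]; last by rewrite q1Q q1s.
      by rewrite (only q qQ qs).
    rewrite (bigD1 p) /=; last by rewrite ps !inE eqxx.
    rewrite zq1 // aQ // pQ.
    rewrite (eq_bigl (fun t => (t \in s) && (t \notin Q))); last first.
      move=> t; rewrite !inE; case: (eqVneq t p) => [->|tp] /=.
        by rewrite ps pQ.
      by case: (t \in s); case: (t \in Q).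
    rewrite (eq_bigr a); last by move=> t /andP [ts /negbTE tQ]; rewrite zq1 // tQ subr0.
    by rewrite /= sub0r addrC subr_le0.
have tot : \sum_(t in s) a t <= 1.
  rewrite (bigID (fun t => t \in Q)) /= big1 ?add0r //.
  by move=> t /andP [ts tQ]; rewrite aQ.
case: (boolP [exists t in s, a t != 0]).
- case/exists_inP => y ys ay0; right; exists y.
  have ay1 : 1 <= a y by have := age0 y ys; lia.
  move: tot; rewrite (bigD1 y) //=.
  have rge : 0 <= \sum_(t in s | t != y) a t.
    by apply: sumr_ge0 => t /andP [ts _]; exact: age0.
  move=> tot.
  have ay : a y = 1.
    apply/eqP; rewrite eq_le ay1 andbT; apply: le_trans tot; rewrite lerDl //.
  have r0 : \sum_(t in s | t != y) a t = 0.
    apply/eqP; rewrite eq_le rge andbT; move: tot.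
    by rewrite ay -[X in _ <= X]addr0 lerD2l.
  rewrite xe (bigD1 y) //= ay scale1r big1 ?addr0 //.
  move=> t tP; rewrite (psumr_eq0P _ r0 tP) ?scale0r //.
  by move=> t' /andP [t's _]; exact: age0.
- rewrite negb_exists_in => /forall_inP H; left.
  by rewrite xe big1 // => t ts; have := H t ts; rewrite negbK => /eqP ->; rewrite scale0r.
Qed.


Lemma prim_exists (S : {set I}) : S \notin cones -> exists Q : {set I},
  [/\ Q \subset S, Q \notin cones & forall Q' : {set I}, Q' \proper Q -> Q' \in cones].
Proof.
move=> Sn.
pose P := fun Q : {set I} => (Q \subset S) && (Q \notin cones).
have PS : P S by rewrite /P subxx Sn.
case: (arg_minnP (fun Q : {set I} => #|Q|) PS) => Q /andP [QS Qn] Hmin.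
exists Q; split => // Q' /andP [Q'Q nQQ']; apply: contraT => Q'n.
have := Hmin Q'; rewrite /P (subset_trans Q'Q QS) Q'n => /(_ isT).
have : (#|Q'| < #|Q|)%N by rewrite proper_card // /proper Q'Q nQQ'.
by move=> lt le; move: (leq_trans lt le); rewrite ltnn.
Qed.

Lemma sum_natQ (Q : {set I}) : (\sum_i (i \in Q : nat) = #|Q|)%N.
Proof.
rewrite -sum1_card [RHS]big_mkcond /=; apply: eq_bigr => i _.
by case: (i \in Q).
Qed.

Lemma step j (N : nat) (c : I -> nat) : (0 < N)%N -> c j = 0%N ->
  N%:R *: ur j = \sum_i (c i)%:R *: ur i ->
  exceptional u cones j \/ exists c' : I -> nat,
    [/\ c' j = 0%N, (\sum_i c' i < \sum_i c i)%N & N%:R *: ur j = \sum_i (c' i)%:R *: ur i].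
Proof.
move=> N0 cj E.
pose S := [set i | (0 < c i)%N].
have jS : j \notin S by rewrite inE cj.
have Sn : S \notin cones.
  apply/negP => Sc.
  have pS : pos_cone u S (N%:R *: ur j).
    apply/pos_coneP; exists (fun i => (c i)%:R); split => //.
    by move=> i; rewrite inE lt0n negbK => /eqP ->.
  have pj : pos_cone u [set j] (N%:R *: ur j).
    apply/pos_coneP; exists (fun i => if i == j then N%:R else 0); split.
    - by move=> i; case: (i == j).
    - by move=> i; rewrite inE => /negbTE ->.
    - rewrite (bigD1 j) //= eqxx big1 ?addr0 // => i /negbTE ->.
      by rewrite scale0r.
  have := (Hint Sc (Hsing j) _).1 (conj pS pj).
  have -> : S :&: [set j] = set0.
    apply/setP => i; rewrite !inE; case: eqP => [->|_]; first by rewrite cj.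
    by rewrite andbF.
  move/pos_cone0/eqP; rewrite scaler_eq0 pnatr_eq0 (negbTE (ur_neq0 j)) orbF => /eqP N0'.
  by rewrite N0' in N0.
have [Q [QS Qn Qp]] := prim_exists Sn.
have jQ : j \notin Q by apply: contra jS; exact: (subsetP QS).
have cQ i : i \in Q -> (0 < c i)%N by move=> iQ; have := subsetP QS i iQ; rewrite inE.
have Q2 : (2 <= #|Q|)%N.
  have [Q0|[q qQ]] := set_0Vmem Q.
    by move: Qn; rewrite Q0 (Hsub (Hsing j) (sub0set _)).
  have [q' q'Q q'q] : exists2 q', q' \in Q & q' != q.
    apply/exists_inP; apply: contraT; rewrite negb_exists_in => /forall_inP H.
    suff : Q \in cones by rewrite (negbTE Qn).
    apply: (Hsub (Hsing q)); apply/subsetP => i iQ.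
    by rewrite inE; apply: contraT => iq; have := H i iQ; rewrite iq.
  have : [set q; q'] \subset Q by apply/subsetP => i; rewrite !inE => /orP [] /eqP ->.
  by move/subset_leq_card; rewrite cards2 eq_sym q'q.
have gen : forall e : I -> nat, e j = 0%N -> (\sum_i e i <= 1)%N ->
    \sum_(i in Q) ur i = \sum_i (e i)%:R *: ur i ->
    exists c' : I -> nat,
    [/\ c' j = 0%N, (\sum_i c' i < \sum_i c i)%N & N%:R *: ur j = \sum_i (c' i)%:R *: ur i].
  move=> e ej e1 Ee.
  exists (fun i => (c i - (i \in Q) + e i)%N); split.
  - by rewrite cj ej (negbTE jQ).
  - have : (\sum_i (c i - (i \in Q) + e i) + #|Q| = \sum_i c i + \sum_i e i)%N.
      rewrite -sum_natQ -!big_split /=; apply: eq_bigr => i _.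
      case: (boolP (i \in Q)) => iQ /=; last by rewrite subn0 addn0.
      by have := cQ i iQ; lia.
    lia.
  - rewrite E.
    have -> : \sum_i (c i)%:R *: ur i = \sum_i (c i)%:R *: ur i - \sum_(i in Q) ur i + \sum_i (e i)%:R *: ur i.
      by rewrite Ee subrK.
    rewrite [\sum_(i in Q) _]big_mkcond /= -sumrB -big_split /=; apply: eq_bigr => i _.
    case: (boolP (i \in Q)) => iQ /=.
      rewrite natrD natrB ?cQ // scalerDl scalerBl scale1r //.
    by rewrite subn0 subr0 natrD scalerDl.
have [E0|[y Ey]] := sato Qn Qp.
- right; apply: (gen (fun _ => 0%N)) => //.
    by rewrite big1.
  by rewrite E0 big1 // => i _; rewrite scale0r.
- case: (eqVneq y j) => [yj|yj].
    left; exists Q; split; first by split.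
    by apply: ur_inj_sum; rewrite Ey yj.
  right; apply: (gen (fun i => (i == y) : nat)).
  + by rewrite eq_sym (negbTE yj).
  + by rewrite (bigD1 y) //= eqxx big1 // => i /negbTE ->.
  + rewrite Ey (bigD1 y) //= eqxx scale1r big1 ?addr0 // => i /negbTE ->.
    by rewrite scale0r.
Qed.

Lemma iter_exc j : forall m (N : nat) (c : I -> nat), (0 < N)%N -> c j = 0%N ->
  (\sum_i c i <= m)%N -> N%:R *: ur j = \sum_i (c i)%:R *: ur i -> exceptional u cones j.
Proof.
elim=> [|m IH] N c N0 cj cm E.
  case: (step N0 cj E) => // [[c' [_ lt _]]].
  by move: (leq_trans lt cm); rewrite ltn0.
case: (step N0 cj E) => // [[c' [c'j lt E']]].
apply: (IH N c') => //.
by move: (leq_trans lt cm); rewrite ltnS.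
Qed.


Definition indepR (P : {set I}) := forall d : I -> R, supp_in P d ->
  \sum_i d i *: ur i = 0 -> forall i, d i = 0.

Lemma carath j : forall (k : nat) (c : I -> R), (forall i, 0 <= c i) -> c j = 0 ->
  (#|[set i | c i != 0%R]| <= k)%N -> ur j = \sum_i c i *: ur i ->
  exists c' : I -> R, [/\ (forall i, 0 <= c' i), c' j = 0, ur j = \sum_i c' i *: ur i
                       & indepR [set i | c' i != 0]].
Proof.
elim=> [|k IH] c cge cj ck E.
  exists c; split => // d dS _ i; apply: dS.
  by move: ck; rewrite leqn0 cards_eq0 => /eqP ->; rewrite inE.
case: (classic (indepR [set i | c i != 0])) => Hind; first by exists c.
have [d [dS d0 [i0 di0]]] : exists d : I -> R, [/\ supp_in [set i | c i != 0] d,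
    \sum_i d i *: ur i = 0 & exists i0, 0 < d i0].
  apply: NNPP => H; apply: Hind => d dS d0 i; apply: NNPP => di.
  case: (ltrgt0P (d i)) => [dpos|dneg|//].
  - by apply: H; exists d; split => //; exists i.
  - apply: H; exists (fun i => - d i); split.
    + by move=> t tS; rewrite dS // oppr0.
    + by under eq_bigr => t _ do rewrite scaleNr; rewrite sumrN d0 oppr0.
    + by exists i; rewrite oppr_gt0.
have [p dp Hp] : exists2 p, 0 < d p & forall i, 0 < d i -> c p / d p <= c i / d i.
  by case: (@arg_minP _ _ _ i0 (fun i => 0 < d i) (fun i => c i / d i) di0) => p dp H; exists p.
pose s := c p / d p.
have s0 : 0 <= s by rewrite /s divr_ge0 // ltW.
pose c' i := c i - s * d i.
have pS : p \in [set i | c i != 0].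
  by rewrite inE; apply: contraT; rewrite negbK => /eqP cp; move: dp; rewrite dS ?ltxx // inE cp eqxx.
have c'p : c' p = 0 by rewrite /c' /s divfK ?subrr // gt_eqF.
have c'S i : c' i != 0 -> i \in [set i | c i != 0] :\ p.
  move=> ci; rewrite !inE; apply/andP; split.
    by apply: contraNneq ci => ->; rewrite c'p.
  by apply: contraNneq ci => ci0; rewrite /c' ci0 dS ?mulr0 ?subrr // inE ci0 eqxx.
apply: (IH c').
- move=> i; rewrite /c' subr_ge0.
  case: (ltP 0 (d i)) => di.
    by have := Hp i di; rewrite ler_pdivlMr.
  by apply: le_trans (cge i); rewrite mulr_ge0_le0.
- by rewrite /c' cj dS ?mulr0 ?subrr // inE cj eqxx.
- have : (#|[set i | c' i != 0%R]| <= #|[set i | c i != 0%R] :\ p|)%N.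
    by apply: subset_leq_card; apply/subsetP => i; rewrite inE => /c'S.
  by move/leq_trans; apply; rewrite (cardsD1 p) pS /= add1n ltnS in ck.
- rewrite E /c'; under [RHS]eq_bigr => i _ do rewrite scalerBl -scalerA.
  by rewrite sumrB -scaler_sumr d0 scaler0 subr0.
Qed.


Lemma ratify j (c : I -> R) : (forall i, 0 <= c i) -> c j = 0 ->
  ur j = \sum_i c i *: ur i -> indepR [set i | c i != 0] ->
  exists N : nat, exists m : I -> nat,
    [/\ (0 < N)%N, m j = 0%N & N%:R *: ur j = \sum_i (m i)%:R *: ur i].
Proof.
move=> cge cj E ind.
set P := [set i | c i != 0].
pose A : 'M[rat]_(#|I|, n) :=
  \matrix_(k, l) (if enum_val k \in P then (u (enum_val k) 0 l)%:~R else 0).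
pose v : 'rV[rat]_n := map_mx intr (u j).
have vR : map_mx ratr v = ur j.
  by apply/rowP => l; rewrite !mxE ratr_int.
have key (w : 'rV[R]_#|I|) : w *m map_mx ratr A =
    \sum_i (if i \in P then w 0 (enum_rank i) else 0) *: ur i.
  apply/rowP => l; rewrite mxE summxE.
  pose H i := w 0 (enum_rank i) * (if i \in P then ur i 0 l else 0).
  rewrite (eq_bigr (fun k => H (enum_val k))); last first.
    move=> k _; rewrite /H enum_valK !mxE; case: ifP => _; last by rewrite rmorph0.
    by rewrite ratr_int.
  rewrite -big_enum_val /=; apply: eq_bigr => i _.
  by rewrite /H mxE; case: ifP => _; rewrite mxE ?urE // mulr0 mul0r.
have wc : (\row_k c (enum_val k)) *m map_mx ratr A = ur j.
  rewrite key E; apply: eq_bigr => i _; rewrite mxE enum_rankK.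
  by case: ifP => // /negbT; rewrite inE negbK => /eqP ->.
have sub : (ur j <= map_mx ratr A)%MS by rewrite -wc submxMl.
pose rq := v *m pinvmx A.
have rqE : map_mx ratr rq *m map_mx ratr A = ur j.
  by rewrite map_mxM map_pinvmx vR mulmxKpV.
pose q i := if i \in P then rq 0 (enum_rank i) else 0.
have Eq : ur j = \sum_i (ratr (q i)) *: ur i.
  rewrite -{1}rqE key; apply: eq_bigr => i _; rewrite /q mxE.
  by case: ifP => //; rewrite rmorph0.
have cq i : c i = ratr (q i).
  apply/eqP; rewrite -subr_eq0; apply/eqP.
  apply: (ind (fun i => c i - ratr (q i))).
    move=> t; rewrite inE negbK => /eqP ct.
    by rewrite /q ct inE ct eqxx /= rmorph0 subrr.
  under eq_bigr => t _ do rewrite scalerBl.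
  by rewrite sumrB -E -Eq subrr.
have q0 i : 0 <= q i by rewrite -(ler0q R) -cq.
pose D := \prod_i denq (q i).
pose Di i := \prod_(i' | i' != i) denq (q i').
have Dpos : 0 < D by apply: prodr_gt0 => i _; exact: denq_gt0.
have Dipos i : 0 < Di i by apply: prodr_gt0 => i' _; exact: denq_gt0.
have Hi i : D%:~R * ratr (q i) = (numq (q i) * Di i)%:~R :> R.
  rewrite /D (bigD1 i) //= intrM -/(Di i) intrM mulrAC /ratr [_%:~R * (_ / _)]mulrC divfK //.
  by rewrite intr_eq0 denq_neq0.
exists (absz D), (fun i => absz (numq (q i) * Di i)); split.
- by rewrite absz_gt0 gt_eqF.
- by rewrite /q inE cj eqxx /= mul0r.
- rewrite natr_absz gtr0_norm // Eq scaler_sumr; apply: eq_bigr => i _.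
  rewrite scalerA Hi natr_absz ger0_norm //.
  by rewrite mulr_ge0 ?numq_ge0 // ltW.
Qed.

End Main.

Unset Implicit Arguments.
Set Strict Implicit.

Theorem lemma3p3 (R : realType) (n : nat) (I : finType) (u : I -> 'rV[int]_n)
    (cones : {set {set I}}) :
  smooth_complete_fan R u cones ->
  Fano R u cones ->
  all_toric_subvarieties_Fano R u cones ->
  forall (j : I) (c : I -> R),
    (forall i, 0 <= c i) ->
    ur R u j = \sum_(i | i != j) c i *: ur R u i ->
    exceptional u cones j.
Proof.
move=> Hfan _ HFT j c cge E.
pose c0 i := if i == j then 0 else c i.
have c0ge i : 0 <= c0 i by rewrite /c0; case: ifP.
have c0j : c0 j = 0 by rewrite /c0 eqxx.
have E0 : ur R u j = \sum_i c0 i *: ur R u i.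
  rewrite E big_mkcond /=; apply: eq_bigr => i _; rewrite /c0.
  by case: eqP => _ /=; rewrite ?scale0r.
have [c' [c'ge c'j E' ind]] := carath c0ge c0j (max_card _) E0.
have [N [m [N0 mj Em]]] := ratify c'ge c'j E' ind.
exact: (iter_exc Hfan HFT N0 mj (leqnn _) Em).
Qed.
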